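(* Let $A$ be an $n\times n$ complex matrix and let $P(w)=\prod_{\ell=1}^{p}(w-w_{\ell})$ be a polynomial with complex roots listed in a chosen order such that $P(A)=0$. For $k=0,\dots,p$ set $E_{k}=\prod_{\ell=1}^{k}(A-w_{\ell})\,\mathbb{C}^n$ and $N_{k}=\dim E_{k}$ (so $N_0=n$ and $N_p=0$), and for $1\le \ell\le p-1$ set $\lambda_{\ell}=w_{\ell+1}-w_{\ell}$. Fix $j$ with $1\le j\le p-1$ and $\lambda_j\neq 0$ (i.e. $w_j\neq w_{j+1}$), and let $(N'_k)$, $(\lambda'_\ell)$ denote the same quantities computed from the reordered factorization in which the $j$-th and $(j+1)$-th linear factors $(w-w_j)$ and $(w-w_{j+1})$ are interchanged. Then $$N'_k=N_k\ (k\neq j),\qquad N'_j=N_{j-1}+N_{j+1}-N_j,$$ that is, the dimension vector changes by the simple Weyl reflection at the node $j$ of the linear ($A$-type) chain with nodes $0,1,\dots,p-1$ (node $0$ carrying $N_0=n$), and the couplings change by the corresponding reflection $$\lambda'_{j-1}=\lambda_{j-1}+\lambda_j,\qquad \lambda'_j=-\lambda_j,\qquad \lambda'_{j+1}=\lambda_{j+1}+\lambda_j,\qquad \lambda'_\ell=\lambda_\ell\ (\ell\neq j-1,j,j+1),$$ where for $j=1$ the coupling $\lambda_0$ attached to node $0$ is any quantity of the form $c+w_1$ (with $c$ independent of the ordering) and $\lambda'_0=c+w'_1=c+w_2=\lambda_0+\lambda_1$, and where couplings with indices outside $0,\dots,p-1$ are ignored.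
   Context: In the paper, for a Fuchsian system with residue matrix $A_i$ at a marked point $z_i$, the data $(N_{i,k})$ are the dimensions of the filtration of the fiber, attached to the nodes $\bullet_{i,k}$ of the $i$-th branch of a star-shaped quiver whose central node $\star$ carries $n$; the Fayet–Iliopoulos coupling at $\bullet_{i,\ell}$ ($\ell\ge1$) is $\lambda_{i,\ell}=w_{i,\ell+1}-w_{i,\ell}$ and at the central node it is $\lambda_\star=\sum_i w_{i,1}$. The (Seiberg duality $=$) Weyl reflection at a simple root $\alpha_\sigma$ with $\lambda_\sigma\neq0$ acts by $\boldsymbol{N}\mapsto \boldsymbol{N}-\langle\boldsymbol{N},\alpha_\sigma\rangle\alpha_\sigma$ and $\lambda_\tau\mapsto\lambda_\tau-\langle\alpha_\tau,\alpha_\sigma\rangle\lambda_\sigma$, where $\langle-,-\rangle$ is the symmetric bilinear form given by the Cartan matrix of the (star-shaped) graph ($2$ on the diagonal, $-1$ for adjacent nodes, $0$ otherwise). The paper's statement is phrased as: the reflection at node $\bullet_{i,\ell}$ (with $\lambda_{i,\ell}\neq 0$) has the effect of interchanging the order of the two factors $(w-w_{i,\ell})$ and $(w-w_{i,\ell+1})$ of $P_i(w)$; the claim above is this statement written out on dimension vectors and couplings. *)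

(* Defs.v *)
From HB Require Import structures.
From mathcomp Require Import all_boot all_order all_algebra.
From mathcomp Require Import complex.
Set Implicit Arguments. Unset Strict Implicit. Unset Printing Implicit Defensive.
Import Order.TTheory GRing.Theory Num.Theory.
Local Open Scope ring_scope.

(* roots are indexed 1-based: w 1, ..., w p *)
Definition filt_op (F : fieldType) (n : nat) (A : 'M[F]_n) (w : nat -> F) (k : nat)
  : 'M[F]_n := \prod_(1 <= l < k.+1) (A - (w l)%:M).

Definition Ndim (F : fieldType) (n : nat) (A : 'M[F]_n) (w : nat -> F) (k : nat) : nat :=
  \rank (filt_op A w k).

Definition coupling (F : fieldType) (c : F) (w : nat -> F) (l : nat) : F :=
  if l == 0%N then c + w 1%N else w l.+1 - w l.

Definition swap_roots (F : Type) (j : nat) (w : nat -> F) (l : nat) : F :=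
  if l == j then w j.+1 else if l == j.+1 then w j else w l.

(* Main.v *)
Require Import Defs.
From HB Require Import structures.
From mathcomp Require Import all_boot all_order all_algebra.
From mathcomp Require Import complex.
From mathcomp Require Import ring zify.
Import Order.TTheory GRing.Theory Num.Theory.
Local Open Scope ring_scope.

Section S.
Variables (F : fieldType) (n : nat) (A : 'M[F]_n).

Lemma scal_comm (a : F) (M : 'M[F]_n) : a%:M * M = M * a%:M.
Proof. by rewrite -mulmxE scalar_mxC. Qed.

Lemma fac_comm (a b : F) : (A - a%:M) * (A - b%:M) = (A - b%:M) * (A - a%:M).
Proof.
rewrite !mulrBl !mulrBr (scal_comm a A) (scal_comm b A) (scal_comm a b%:M).
move: (A*A) (A*b%:M) (A*a%:M) (b%:M*a%:M) => p q r s.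
by rewrite !opprB !addrA !(addrAC _ s) (addrAC p (-q)).
Qed.

Lemma prod_comm (a : F) (r : seq nat) (P : pred nat) (f : nat -> F) :
  (A - a%:M) * \prod_(l <- r | P l) (A - (f l)%:M)
  = \prod_(l <- r | P l) (A - (f l)%:M) * (A - a%:M).
Proof.
apply: (big_ind (fun x => (A - a%:M) * x = x * (A - a%:M))).
- by rewrite mulr1 mul1r.
- by move=> x y Hx Hy; rewrite mulrA Hx -mulrA Hy mulrA.
- by move=> i _; apply: fac_comm.
Qed.

Lemma rank_swap (B : 'M[F]_n) (a b : F) : a != b ->
  (forall c, (A - c%:M) *m B = B *m (A - c%:M)) ->
  (\rank (B *m (A - a%:M)) + \rank (B *m (A - b%:M))
   = \rank B + \rank (B *m (A - a%:M) *m (A - b%:M)))%N.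
Proof.
move=> ab Bc.
set X := B *m (A - a%:M); set Y := B *m (A - b%:M); set Z := X *m (A - b%:M).
have XB : (X <= B)%MS by rewrite /X -Bc submxMl.
have YB : (Y <= B)%MS by rewrite /Y -Bc submxMl.
have hba : b - a != 0 by rewrite subr_eq0 eq_sym.
have XY : X - Y = (b - a) *: B.
  by rewrite /X /Y -mulmxBr opprB addrC addrA subrK -raddfB /= mul_mx_scalar.
have BXY : (B <= X + Y)%MS.
  have -> : B = (b - a)^-1 *: (X - Y) by rewrite XY scalerA mulVf // scale1r.
  apply: scalemx_sub; apply: addmx_sub_adds => //; by rewrite eqmx_opp.
have eqB : \rank (X + Y)%MS = \rank B.
  by apply: eqmx_rank; apply/andP; rewrite BXY addsmx_sub XB YB.
have fc : (A - a%:M) *m (A - b%:M) = (A - b%:M) *m (A - a%:M).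
  by rewrite mulmxE fac_comm.
have ZX : Z = (A - b%:M) *m X.
  by rewrite /Z /X -mulmxA fc mulmxA -Bc -mulmxA.
have YZ : Y *m (A - a%:M) = Z by rewrite /Z /X /Y -!mulmxA fc.
have ZY : Z = (A - a%:M) *m Y by rewrite -YZ /Y mulmxA Bc.
have ZXY : (Z <= X :&: Y)%MS.
  by rewrite sub_capmx {1}ZX ZY !submxMl.
have XYZ : (X :&: Y <= Z)%MS.
  set C := (X :&: Y)%MS.
  have : (C <= X)%MS by rewrite capmxSl.
  have : (C <= Y)%MS by rewrite capmxSr.
  move=> /submxP [D2 e2] /submxP [D1 e1].
  have hab : a - b != 0 by rewrite subr_eq0.
  have e : C *m (A - b%:M) - C *m (A - a%:M) = (a - b) *: C.
    by rewrite -mulmxBr opprB addrC addrA subrK -raddfB /= mul_mx_scalar.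
  have e' : (a - b) *: C = (D1 - D2) *m Z.
    rewrite -e mulmxBl; congr (_ - _).
      by rewrite {1}e1 -mulmxA.
    by rewrite {1}e2 -mulmxA YZ.
  apply/submxP; exists ((a - b)^-1 *: (D1 - D2)).
  by rewrite -scalemxAl -e' scalerA mulVf // scale1r.
have eqC : \rank (X :&: Y)%MS = \rank Z by apply: eqmx_rank; apply/andP; rewrite ZXY XYZ.
by rewrite -mxrank_sum_cap eqB eqC.
Qed.
End S.

Lemma sw1 (T : Type) j (w : nat -> T) : swap_roots j w j = w j.+1.
Proof. by rewrite /swap_roots eqxx. Qed.
Lemma sw2 (T : Type) j (w : nat -> T) : swap_roots j w j.+1 = w j.
Proof. by rewrite /swap_roots eqxx (_ : (j.+1 == j) = false) //; lia. Qed.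
Lemma swo (T : Type) j (w : nat -> T) l : l != j -> l != j.+1 -> swap_roots j w l = w l.
Proof. by rewrite /swap_roots => /negbTE -> /negbTE ->. Qed.

Theorem mainTheorem1 (R : rcfType) (n p : nat) (A : 'M[R[i]]_n)
    (w : nat -> R[i]) (j : nat) :
  \prod_(1 <= l < p.+1) (A - (w l)%:M) = 0 ->
  (0 < j)%N -> (j < p)%N -> w j != w j.+1 ->
  let w' := swap_roots j w in
  [/\ (forall k, (k <= p)%N -> k != j -> Ndim A w' k = Ndim A w k),
      (Ndim A w' j)%:Z = (Ndim A w j.-1)%:Z + (Ndim A w j.+1)%:Z - (Ndim A w j)%:Z
    & forall c : R[i],
      [/\ coupling c w' j.-1 = coupling c w j.-1 + coupling c w j,
          coupling c w' j = - coupling c w j,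
          (j.+1 < p)%N -> coupling c w' j.+1 = coupling c w j.+1 + coupling c w j
        & forall l, (l < p)%N -> l != j.-1 -> l != j -> l != j.+1 ->
            coupling c w' l = coupling c w l]].
Proof.
case: j => [//|m] _ _ jp wne w' /=.
have Plow : forall k, (k <= m)%N -> filt_op A w' k = filt_op A w k.
  move=> k km; rewrite /filt_op; apply: eq_big_nat => l /andP [l1 l2].
  by rewrite /w' swo //; lia.
have Pj : filt_op A w' m.+1 = filt_op A w m * (A - (w m.+2)%:M).
  by rewrite /filt_op big_nat_recr //= -/(filt_op A w' m) Plow // /w' sw1.
have Pj' : filt_op A w m.+1 = filt_op A w m * (A - (w m.+1)%:M).
  by rewrite /filt_op big_nat_recr.
have Pj2 : filt_op A w m.+2 = filt_op A w m * (A - (w m.+1)%:M) * (A - (w m.+2)%:M).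
  by rewrite /filt_op big_nat_recr //= -/(filt_op A w m.+1) Pj'.
have Phigh : forall k, (m.+2 <= k)%N -> filt_op A w' k = filt_op A w k.
  move=> k km; have km3 : (m.+3 <= k.+1)%N by [].
  rewrite /filt_op (big_cat_nat (n := m.+3) _ km3) //.
  rewrite [in RHS](big_cat_nat (n := m.+3) _ km3) //.
  congr (_ * _); last first.
    by apply: eq_big_nat => l /andP [l1 l2]; rewrite /w' swo //; lia.
  rewrite -/(filt_op A w' m.+2) -/(filt_op A w m.+2) Pj2.
  rewrite /filt_op big_nat_recr //= -/(filt_op A w' m.+1) Pj /w' sw2.
  by rewrite -!mulrA fac_comm.
have Bc : forall c, (A - c%:M) *m filt_op A w m = filt_op A w m *m (A - c%:M).
  by move=> c; rewrite mulmxE /filt_op prod_comm.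
have RS := @rank_swap _ _ _ _ _ _ wne Bc.
split.
- move=> k _ kj; rewrite /Ndim.
  have [km|km] := leqP k m; first by rewrite Plow.
  by rewrite Phigh //; lia.
- rewrite /Ndim Pj Pj2 Pj' -!mulmxE.
  move: RS; set x := \rank _; set y := \rank _; set z := \rank _; set t := \rank _.
  move=> RS; apply/eqP; rewrite eq_sym subr_eq -!PoszD; apply/eqP; congr Posz; by rewrite -RS addnC.

move=> c; split.
- rewrite /w'; clear.
  case: m => [|m'].
    by rewrite /coupling /= sw1; ring.
  rewrite /coupling /= sw1 swo; [ring|lia|lia].
- by rewrite /coupling /= /w' sw1 sw2; ring.
- by move=> _; rewrite /coupling /= /w' sw2 swo; [ring|lia|lia].
- move=> l _ h1 h2 h3; rewrite /coupling.
  case: eqP => [l0|_].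
    by rewrite /w' swo //; lia.
  by rewrite /w' !swo //; lia.
Qed.
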